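(* Let $k$ be a nonperfect field of characteristic $2$, let $a\in k\setminus k^2$, let $G=PGL_2$ and, writing $\bar A$ for the image in $PGL_2$ of $A\in GL_2$, let $u=\overline{\begin{pmatrix}0&a\\1&0\end{pmatrix}}\in G(k)$ and $U=\langle u\rangle$. Then $U$ is $G$-irreducible over $k$ (in particular $G$-completely reducible over $k$), but $U$ is not $G$-completely reducible.
   Context: For a connected reductive $k$-group $G$, a closed subgroup $H$ is $G$-completely reducible over $k$ if whenever $H$ is contained in a $k$-parabolic subgroup $P$ of $G$, $H$ is contained in some $k$-Levi subgroup of $P$; $H$ is $G$-irreducible over $k$ if it lies in no proper $k$-parabolic subgroup. ''$G$-completely reducible'' means $G$-completely reducible over $\bar k$. *)

(* Defs.v *)
From HB Require Import structures.
From mathcomp Require Import all_boot all_order all_algebra.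
Set Implicit Arguments. Unset Strict Implicit. Unset Printing Implicit Defensive.
Import GRing.Theory.
Local Open Scope ring_scope.

Section PGL2.
Variable F : fieldType.

(* A subgroup of PGL_2(F) is represented by the set of all its lifts to GL_2(F),
   i.e. a predicate on 2x2 matrices (stable under nonzero scalars). *)
Definition subgrp := 'M[F]_2 -> Prop.

Definition GL2 : subgrp := fun A => A \in unitmx.

(* Borel subgroup: the stabiliser of the line spanned by a nonzero row vector v
   (matrices act on row vectors on the right). *)
Definition borel (v : 'rV[F]_2) : subgrp :=
  fun A => A \in unitmx /\ stablemx v A.

Definition torus (v w : 'rV[F]_2) : subgrp :=
  fun A => A \in unitmx /\ stablemx v A /\ stablemx w A.

(* F-parabolic subgroups of PGL_2: G itself, and the Borel subgroups defined
   over F, i.e. stabilisers of F-rational points of P^1. *)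
Definition parabolic (P : subgrp) : Prop :=
  (forall A, P A <-> GL2 A) \/
  exists v : 'rV[F]_2, v != 0 /\ forall A, P A <-> borel v A.

Definition levi (P L : subgrp) : Prop :=
  ((forall A, P A <-> GL2 A) /\ (forall A, L A <-> GL2 A)) \/
  exists v w : 'rV[F]_2, \rank (col_mx v w) = 2%N /\
    (forall A, P A <-> borel v A) /\ (forall A, L A <-> torus v w A).

Definition proper_sub (P : subgrp) : Prop := ~ (forall A, P A <-> GL2 A).

Definition contained (H P : subgrp) : Prop := forall A, H A -> P A.

Definition PGL2_cr (H : subgrp) : Prop :=
  forall P, parabolic P -> contained H P ->
    exists L, levi P L /\ contained H L.

Definition PGL2_irreducible (H : subgrp) : Prop :=
  forall P, parabolic P -> contained H P -> ~ proper_sub P.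

Definition cyc_gen (u : 'M[F]_2) : subgrp :=
  fun A => exists (n : nat) (c : F), c != 0 /\ A = c *: u ^+ n.

End PGL2.

Definition u_mat (k : fieldType) (a : k) : 'M[k]_2 :=
  \matrix_(i < 2, j < 2)
    if ((i : nat) == 0%N) && ((j : nat) == 1%N) then a
    else if ((i : nat) == 1%N) && ((j : nat) == 0%N) then 1 else 0.

(* Main.v *)
Require Import Defs.
From HB Require Import structures.
From mathcomp Require Import all_boot all_order all_algebra.
From mathcomp Require Import ring.
Import GRing.Theory.
Local Open Scope ring_scope.

Lemma det2 (R : comNzRingType) (A : 'M[R]_2) : \det A = A 0 0 * A 1 1 - A 0 1 * A 1 0.
Proof.
rewrite (expand_det_row _ 0) !big_ord_recl !big_ord0 /cofactor !det_mx11 !mxE /=.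
rewrite expr0 expr1 mul1r mulN1r.
rewrite addr0 mulrN; congr (A _ _ * A _ _ - A _ _ * A _ _). all: try by apply: val_inj.
Qed.

Lemma col2 (R : Type) (v w : 'rV[R]_2) j : (col_mx v w : 'M_2) 0 j = v 0 j /\ (col_mx v w : 'M_2) 1 j = w 0 j.
Proof.
split.
  have -> : (0 : 'I_2) = lshift 1 (0 : 'I_1) by apply: val_inj.
  exact: col_mxEu.
have -> : (1 : 'I_2) = rshift 1 (0 : 'I_1) by apply: val_inj.
exact: col_mxEd.
Qed.

Lemma l01 : lift ord0 (ord0 : 'I_1) = 1 :> 'I_2.
Proof. by apply: val_inj. Qed.

Lemma l00 : ord0 = 0 :> 'I_2.
Proof. by apply: val_inj. Qed.

Lemma mulu (F : fieldType) (a : F) (v : 'rV[F]_2) : 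
  (v *m u_mat a) 0 0 = v 0 1 /\ (v *m u_mat a) 0 1 = a * v 0 0.
Proof. rewrite !mxE !big_ord_recl !big_ord0 !mxE /=. rewrite l01 !mulr0 !mulr1 !addr0 add0r mulrC l00; by split.
Qed.

Lemma row2_eq (F : Type) (x y : 'rV[F]_2) : x 0 0 = y 0 0 -> x 0 1 = y 0 1 -> x = y.
Proof.
move=> h0 h1; apply/matrixP => i j.
rewrite (_ : i = 0); last by apply: val_inj; case: i => [[|]].
case: j => [[|[|j]] hj].
- by rewrite (_ : Ordinal hj = 0) //; apply: val_inj.
- by rewrite (_ : Ordinal hj = 1) //; apply: val_inj.
- by [].
Qed.

Lemma mul2 (F : fieldType) (v : 'rV[F]_2) (M : 'M[F]_2) j :
  (v *m M) 0 j = v 0 0 * M 0 j + v 0 1 * M 1 j.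
Proof. by rewrite !mxE !big_ord_recl big_ord0 addr0 l01 l00. Qed.

Lemma eig (F : fieldType) (a : F) (v : 'rV[F]_2) : stablemx v (u_mat a) ->
  exists l, v 0 1 = l * v 0 0 /\ a * v 0 0 = l ^+ 2 * v 0 0.
Proof.
move/sub_rVP => [l hl]; have [h0 h1] := mulu _ a v.
rewrite hl !mxE in h0 h1; exists l; split; first by rewrite -h0.
by rewrite -h1 expr2 -mulrA h0.
Qed.

Lemma noborel (F : fieldType) (a : F) (ha : ~ exists b : F, b ^+ 2 = a)
  (v : 'rV[F]_2) : v != 0 -> ~ stablemx v (u_mat a).
Proof.
move=> hv /eig [l [h1 h2]].
have [x0|nx0] := eqVneq (v 0 0) 0.
  by move: hv; rewrite (row2_eq _ v 0 _ _) ?eqxx // ?mxE // h1 x0 mulr0.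
by apply: ha; exists l; apply: (mulIf nx0).
Qed.

Lemma umem (F : fieldType) (a : F) : cyc_gen (u_mat a) (u_mat a).
Proof. by exists 1%N, 1; rewrite oner_neq0 scale1r expr1. Qed.

Lemma mapu (k K : fieldType) (iota : {rmorphism k -> K}) (a : k) :
  map_mx iota (u_mat a) = u_mat (iota a).
Proof. by apply/matrixP => i j; rewrite !mxE; case: ifP => _; [|case: ifP => _]; rewrite ?rmorph0 ?rmorph1. Qed.

Theorem mainTheorem9 (k : fieldType) (a : k)
    (hchar : 2%N \in [pchar k])
    (hnonperfect : exists x : k, forall y : k, y ^+ 2 != x)
    (ha : ~ exists b : k, b ^+ 2 = a) :
  PGL2_irreducible (cyc_gen (u_mat a)) /\
  PGL2_cr (cyc_gen (u_mat a)) /\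
  (forall (K : closedFieldType) (iota : {rmorphism k -> K}),
      ~ PGL2_cr (cyc_gen (map_mx iota (u_mat a)))).
Proof.
split.
  move=> P [hP|[v [hv hP]]] hc; first by move/(_ hP).
  by exfalso; have /hP [_ hs] := hc _ (umem _ a); exact: noborel hs.
split.
  move=> P [hP|[v [hv hP]]] hc.
    by exists P; split => //; left; split.
  by exfalso; have /hP [_ hs] := hc _ (umem _ a); exact: noborel hs.
move=> K iota; rewrite mapu; set a' := iota a.
have a0 : a != 0 by apply/eqP => a0; apply: ha; exists 0; rewrite a0 expr2 mulr0.
have a'0 : a' != 0 by rewrite fmorph_eq0.
have h2 : (2%:R : K) = 0 by rewrite -(rmorph_nat iota) (pcharf0 hchar) rmorph0.
have [b hb] : exists b : K, b ^+ 2 = a'.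
  have [b hb] := @solve_monicpoly K 2 (fun i => if i == 0%N then a' else 0) isT.
  by exists b; rewrite hb !big_ord_recl big_ord0 /= expr0 mulr1 mul0r !addr0.
have b0 : b != 0 by apply/eqP => b0; move: a'0; rewrite -hb b0 expr2 mulr0 eqxx.
set v : 'rV[K]_2 := \row_(j < 2) if (j : nat) == 0%N then 1 else b.
have v0 : v 0 0 = 1 by rewrite mxE.
have v1 : v 0 1 = b by rewrite mxE.
set u' := u_mat a'.
have hvu : v *m u' = b *: v.
  have [h0 h1] := mulu _ a' v.
  apply: row2_eq; rewrite /u' ?h0 ?h1 !mxE /= ?mulr1 //.
have hvn n : v *m u' ^+ n = b ^+ n *: v.
  elim: n => [|n IH]; first by rewrite expr0 mulmx1 scale1r.
  by rewrite exprS -mulmxE mulmxA hvu -scalemxAl IH scalerA exprS.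
have uu : u' \in unitmx.
  by rewrite unitmxE det2 !mxE /= mul0r sub0r mulr1 unitfE oppr_eq0.
move=> hcr.
have hP : parabolic (borel v).
  by right; exists v; split => //; apply/eqP => /matrixP /(_ 0 0); rewrite v0 mxE; apply/eqP/oner_neq0.
have hcont : contained (cyc_gen u') (borel v).
  move=> A [n [c [c0 ->]]]; split.
    by rewrite unitmxZ ?unitfE //; apply: (@unitrX _ u').
  by apply/sub_rVP; exists (c * b ^+ n); rewrite -scalemxAr hvn scalerA mulrC.
have [L [hl hL]] := hcr _ hP hcont.
case: hl => [[hPG _]|[v' [w [hr [hP' hT]]]]].
  pose A0 : 'M[K]_2 := \matrix_(i < 2, j < 2) if ((i : nat) == 0%N) && ((j : nat) == 1%N) then 0 else 1.
  have : GL2 A0 by rewrite /GL2 unitmxE det2 !mxE /= mul1r mul0r subr0 unitr1.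
  move/hPG => [_ /sub_rVP [l hl]].
  have e0 := mul2 _ v A0 0; have e1 := mul2 _ v A0 1.
  rewrite hl !mxE /= !mulr1 ?mul1r ?mul0r ?add0r in e0 e1.
  move: e1; rewrite e0 ?addr0 ?add0r mulrDl mul1r => /eqP.
  rewrite addrC -subr_eq0 addrK mulf_eq0 orbb (negbTE b0) => h; discriminate h.
have /hL /hT [_ [s1 s2]] := umem _ a'.
have [l0 [y0 e0]] := eig _ _ _ s1; have [l1 [y1 e1]] := eig _ _ _ s2.
have : row_free (col_mx v' w : 'M_2) by rewrite /row_free hr.
rewrite row_free_unit unitmxE det2.
have [c00 c10] := col2 _ v' w 0; have [c01 c11] := col2 _ v' w 1.
rewrite c00 c10 c01 c11 y0 y1.
have -> : v' 0 0 * (l1 * w 0 0) - l0 * v' 0 0 * w 0 0 = v' 0 0 * w 0 0 * (l1 - l0).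
  by ring.
have [x0|nx0] := eqVneq (v' 0 0) 0; first by rewrite x0 !mul0r unitr0.
have [x1|nx1] := eqVneq (w 0 0) 0; first by rewrite x1 mulr0 mul0r unitr0.
have q0 := mulIf nx0 e0; have q1 := mulIf nx1 e1.
have : (l1 - l0) ^+ 2 = 0.
  by rewrite sqrrB -q0 -q1 -mulr_natr h2 mulr0 subr0 -mulr2n -mulr_natr h2 mulr0.
move/eqP; rewrite expf_eq0 /= => /eqP ->; by rewrite mulr0 unitr0.
Qed.
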